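(* Let $E$ be an $r$-round block cipher with block size $n$, and let $F:\mathbb{F}_2^n\times\mathbb{F}_2^m\to\mathbb{F}_2^n$, $F(x,k)=F_k(x)$, be its reduced version consisting of the first $r-1$ rounds, where $k$ ranges over the key space $\mathcal{K}=\mathbb{F}_2^m$ of these rounds. Run Algorithm 2 (described in the context) on $F$ with a polynomial $q(n)$ and a constant $\sigma\in(0,1)$. If Algorithm 2 outputs a truncated differential $(a,b)$, then, except with probability negligible in $n$, there exists a subset $\mathcal{K}'\subseteq\mathcal{K}$ with $|\mathcal{K}'|/|\mathcal{K}|>1-\frac{1}{q(n)}$ such that for every $k\in\mathcal{K}'$, $$\frac{\big|\{x\in\mathbb{F}_2^n : F_k(x\oplus a)\oplus F_k(x)\text{ matches } b\}\big|}{2^n}>1-\sigma .$$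
   Context: Notation: $\oplus$ is bitwise XOR, $+$ is addition in $\mathbb{F}_2$, $u\cdot w$ is the standard inner product over $\mathbb{F}_2$. Write $F=(F_1,\dots,F_n)$ with component Boolean functions $F_j:\mathbb{F}_2^{n+m}\to\mathbb{F}_2$ (input $z=(x,k)$). Walsh spectrum: for $f:\mathbb{F}_2^N\to\mathbb{F}_2$, $S_f(\omega)=2^{-N}\sum_{x\in\mathbb{F}_2^N}(-1)^{f(x)+\omega\cdot x}$. Running the Bernstein–Vazirani (BV) algorithm on $f$ (implemented by the attacker's own quantum circuit) returns a vector $\omega\in\mathbb{F}_2^N$ with probability $S_f(\omega)^2$; distinct runs are independent. Truncated differential: a pair $(a,b)$ with $a\in\mathbb{F}_2^n$ and $b=(b_1,\dots,b_n)\in\{0,1,\times\}^n$; positions $j$ with $b_j\ne\times$ are ''predicted''. A vector $d\in\mathbb{F}_2^n$ matches $b$ if $d_j=b_j$ for every predicted position $j$. Algorithm 2 (parameters: polynomial $q(n)$, constant $\sigma$; set $p(n)=\frac{1}{2\sigma^2}q(n)^2n^3$): 1. For each $j=1,\dots,n$: run BV on $F_j$ independently $p(n)$ times, obtaining $\omega\in\mathbb{F}_2^{n+m}$; let $H_j$ be the set of truncations $(\omega_1,\dots,\omega_n)$ of these outputs. For $i\in\{0,1\}$ let $A_j^i=\{x\in\mathbb{F}_2^n : x\cdot\omega=i\ \forall\omega\in H_j\}$ and $A_j=A_j^0\cup A_j^1$. 2. For $t=n,n-1,\dots,1$: if $2^t(1-\sigma)\le 1$, output ''No'' and stop. Otherwise,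 if there are distinct indices $j_1,\dots,j_t$ with $A_{j_1}\cap\dots\cap A_{j_t}\supsetneq\{\mathbf 0\}$, choose any nonzero $a$ in this intersection, set $b_j=i_j$ for $j\in\{j_1,\dots,j_t\}$, where $i_j$ is such that $a\in A_j^{i_j}$, and $b_j=\times$ otherwise; output $(a,b)$ and stop. If the loop ends, output ''No''. A probability is negligible in $n$ if it is bounded by a function of $n$ that is eventually smaller than $1/\mathrm{poly}(n)$ for every polynomial; probabilities are over the randomness of the BV measurements. *)

(* Defs.v *)
From HB Require Import structures.
From mathcomp Require Import all_boot all_order all_algebra.
Set Implicit Arguments. Unset Strict Implicit. Unset Printing Implicit Defensive.
Import Order.TTheory GRing.Theory Num.Theory.
Local Open Scope ring_scope.

Definition bv (n : nat) := {ffun 'I_n -> bool}.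
Definition zerov (n : nat) : bv n := [ffun => false].
Definition xorv (n : nat) (u w : bv n) : bv n := [ffun i => u i (+) w i].
Definition dotb (n : nat) (u w : bv n) : bool := \big[addb/false]_(i < n) (u i && w i).

(* z = (x, k) in F_2^(n+m): first n coordinates x, last m coordinates k. *)
Definition lpart (n m : nat) (z : bv (n + m)) : bv n := [ffun i => z (lshift m i)].
Definition rpart (n m : nat) (z : bv (n + m)) : bv m := [ffun i => z (rshift n i)].

Definition Fcomp (n m : nat) (F : bv n -> bv m -> bv n) (j : 'I_n) (z : bv (n + m)) : bool :=
  F (lpart z) (rpart z) j.

Definition walsh (R : numFieldType) (N : nat) (f : bv N -> bool) (w : bv N) : R :=
  (2%:R ^+ N)^-1 * \sum_(x : bv N) (-1) ^+ (f x (+) dotb w x).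

(* Outcomes of step 1 of Algorithm 2: for each j and each run r < p, a BV output. *)
Definition sample (n m p : nat) := {ffun 'I_n -> {ffun 'I_p -> bv (n + m)}}.

(* Probability of an outcome: runs are independent, each returns w w.p. S_{F_j}(w)^2 *)
Definition sample_prob (R : numFieldType) (n m p : nat) (F : bv n -> bv m -> bv n)
  (s : sample n m p) : R :=
  \prod_(j < n) \prod_(r < p) (walsh R (Fcomp F j) (s j r)) ^+ 2.

Definition Pr (R : numFieldType) (n m p : nat) (F : bv n -> bv m -> bv n)
  (E : pred (sample n m p)) : R :=
  \sum_(s : sample n m p | E s) sample_prob R F s.

(* A_j^i = {x : x.w = i for all w in H_j}, H_j = truncations of the outputs *)
Definition Aji (n m p : nat) (s : sample n m p) (j : 'I_n) (i : bool) : {set bv n} :=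
  [set x : bv n | [forall r : 'I_p, dotb (lpart (s j r)) x == i]].
Definition Aj (n m p : nat) (s : sample n m p) (j : 'I_n) : {set bv n} :=
  Aji s j false :|: Aji s j true.

Definition nontriv (n m p : nat) (s : sample n m p) (J : {set 'I_n}) : bool :=
  [set zerov n] \proper (\bigcap_(j in J) Aj s j).

(* truncated differential b in {0,1,x}^n : None stands for x *)
Definition tdiff (n : nat) := {ffun 'I_n -> option bool}.
Definition matches (n : nat) (b : tdiff n) (d : bv n) : bool :=
  [forall j, if b j is Some v then d j == v else true].

(* (a,b) is a possible output of step 2 of Algorithm 2 on the outcome s
   (any admissible choice of j_1..j_t and of a is allowed). *)
Definition alg2_output (R : numFieldType) (sigma : R) (n m p : nat)
  (s : sample n m p) (a : bv n) (b : tdiff n) : bool :=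
  [exists t : 'I_n.+1,
    [&& (0 < t)%N,
        [forall t' : 'I_n.+1, (t <= t')%N ==> (1 < 2%:R ^+ t' * (1 - sigma))],
        [forall J : {set 'I_n}, (t < #|J|)%N ==> ~~ nontriv s J] &
        [exists J : {set 'I_n},
          [&& #|J| == t, nontriv s J, a != zerov n,
              a \in \bigcap_(j in J) Aj s j &
              [forall j, if j \in J then
                           (if b j is Some i then a \in Aji s j i else false)
                         else b j == None]]]]].

Definition good_tdiff (R : numFieldType) (sigma qn : R) (n m : nat)
  (F : bv n -> bv m -> bv n) (a : bv n) (b : tdiff n) : bool :=
  [exists K' : {set bv m},
    (1 - qn^-1 < #|K'|%:R / #|{: bv m}|%:R) &&
    [forall k in K',
      1 - sigma < #|[set x : bv n | matches b (xorv (F (xorv x a) k) (F x k))]|%:R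
                  / 2%:R ^+ n]].

Definition nruns (R : archiRealFieldType) (q : {poly R}) (sigma : R) (n : nat) : nat :=
  `|Num.ceil (q.[n%:R] ^+ 2 * n%:R ^+ 3 / (2%:R * sigma ^+ 2))|%N.

Definition negligible (R : numFieldType) (eps : nat -> R) : Prop :=
  forall c : nat, exists N : nat, forall n : nat, (N <= n)%N -> eps n < (n%:R ^+ c)^-1.

(* Main.v *)
Require Import Defs.
From HB Require Import structures.
From mathcomp Require Import all_boot all_order all_algebra.
From mathcomp Require Import ring lra zify.
Import Order.TTheory GRing.Theory Num.Theory.
Set Implicit Arguments. Unset Strict Implicit. Unset Printing Implicit Defensive.
Local Open Scope ring_scope.

Section Fourier.
Variable R : numFieldType.
Variable N : nat.
Implicit Types (w x y u v : bv N).

Lemma dotb_xorr w x y : dotb w (xorv x y) = dotb w x (+) dotb w y.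
Proof.
rewrite /dotb -big_split /=; apply: eq_bigr => i _; rewrite ffunE.
by case: (w i); case: (x i); case: (y i).
Qed.

Lemma sign_dotb w v : (-1) ^+ dotb w v = \prod_(i < N) ((-1) ^+ (w i && v i) : R).
Proof.
rewrite /dotb; apply: (big_morph (fun b : bool => (-1) ^+ b : R)).
  by move=> a b; rewrite signr_addb.
by rewrite expr0.
Qed.

Lemma sum_sign_dotb v :
  \sum_w ((-1) ^+ dotb w v : R) = if v == zerov N then 2%:R ^+ N else 0.
Proof.
under eq_bigr do rewrite sign_dotb.
rewrite -(bigA_distr_bigA (fun i b => ((-1) ^+ (b && v i) : R))) /=.
have E i : \sum_(b : bool) ((-1) ^+ (b && v i) : R) = if v i then 0 else 2%:R.
  rewrite /index_enum !unlock /= addr0 /=.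
  by case: (v i) => /=; rewrite ?expr0 ?expr1 ?subrr ?addNr.
rewrite (eq_bigr (fun i => if v i then 0 else 2%:R)); last by move=> i _; exact: E.
case: eqP => [->|/eqP nz].
  rewrite -[X in _ ^+ X]card_ord -prodr_const; apply: eq_bigr => i _.
  by rewrite ffunE.
have [i vi] : exists i, v i.
  apply/existsP; apply: contraNT nz; rewrite negb_exists => /forallP H.
  by apply/eqP/ffunP => i; rewrite ffunE; move: (H i); case: (v i).
by rewrite (bigD1 i) //= vi mul0r.
Qed.


Lemma xorv_eq0 x y u : (xorv (xorv x y) u == zerov N) = (y == xorv x u).
Proof.
apply/eqP/eqP => [H|->].
  apply/ffunP => i; move/ffunP: H => /(_ i); rewrite !ffunE.
  by case: (x i); case: (y i); case: (u i).
by apply/ffunP => i; rewrite !ffunE; case: (x i); case: (u i).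
Qed.

Lemma autocorr (f : bv N -> bool) u :
  \sum_w (walsh R f w) ^+ 2 * (-1) ^+ dotb w u =
  (2%:R ^+ N)^-1 * \sum_z ((-1) ^+ (f z (+) f (xorv z u)) : R).
Proof.
set c : R := (2%:R ^+ N)^-1.
have step w : (walsh R f w) ^+ 2 * (-1) ^+ dotb w u =
   c ^+ 2 * \sum_x \sum_y (((-1) ^+ f x * (-1) ^+ f y : R) *
        (-1) ^+ dotb w (xorv (xorv x y) u)).
  rewrite /walsh -/c exprMn -mulrA; congr (_ * _).
  rewrite expr2 !big_distrl /=; apply: eq_bigr => x _.
  rewrite -mulrA mulrC big_distrl /= big_distrl /=; apply: eq_bigr => y _.
  rewrite !dotb_xorr !signr_addb; ring.
under eq_bigr do rewrite step.
rewrite -big_distrr /= exchange_big /=.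
under eq_bigr do rewrite exchange_big /=.
have inner x : \sum_y \sum_w (((-1) ^+ f x * (-1) ^+ f y : R) *
        (-1) ^+ dotb w (xorv (xorv x y) u)) =
     2%:R ^+ N * (-1) ^+ (f x (+) f (xorv x u)).
  rewrite (eq_bigr (fun y => if y == xorv x u then
        (-1) ^+ f x * (-1) ^+ f y * 2%:R ^+ N else 0 : R)); last first.
    move=> y _; rewrite -big_distrr /= sum_sign_dotb xorv_eq0.
    by case: eqP; rewrite ?mulr0.
  by rewrite -big_mkcond big_pred1_eq signr_addb mulrC.
rewrite (eq_bigr _ (fun x _ => inner x)) -big_distrr /= mulrA.
congr (_ * _); rewrite /c expr2 -mulrA mulVf ?mulr1 //.
by rewrite expf_neq0 // pnatr_eq0.
Qed.


Lemma dotb0 w : dotb w (zerov N) = false.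
Proof. by rewrite /dotb big1 // => i _; rewrite ffunE andbF. Qed.

Lemma xorv0 x : xorv x (zerov N) = x.
Proof. by apply/ffunP => i; rewrite !ffunE addbF. Qed.

Lemma sum1_bv : \sum_(x : bv N) (1 : R) = 2%:R ^+ N.
Proof. by rewrite sumr_const card_ffun card_bool card_ord natrX. Qed.

Lemma two_pow_neq0 : (2%:R ^+ N : R) != 0.
Proof. by rewrite expf_neq0 // pnatr_eq0. Qed.

Lemma parseval (f : bv N -> bool) : \sum_w (walsh R f w) ^+ 2 = 1.
Proof.
have := autocorr f (zerov N).
under eq_bigr do rewrite dotb0 expr0 mulr1.
move=> ->; under eq_bigr do rewrite xorv0 addbb expr0.
by rewrite sum1_bv mulVf // two_pow_neq0.
Qed.

Lemma alg_solve (A1 A0 C1 C0 c : R) : - A1 + A0 = c * (- C1 + C0) -> A1 + A0 = 1 ->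
  c * (C1 + C0) = 1 -> A1 = c * C1 /\ A0 = c * C0.
Proof.
move=> H1 H2 H4.
have K1 : A1 = c * C1.
  have -> : A1 = (A1 + A0 - (- A1 + A0)) / 2%:R by field.
  by rewrite H1 H2 -{1}H4; field.
split=> //; have -> : A0 = (A1 + A0) - A1 by ring.
by rewrite H2 K1 -H4; ring.
Qed.

Lemma weight_ne (f : bv N -> bool) u (i : bool) :
  \sum_(w | dotb w u != i) (walsh R f w) ^+ 2 =
  (2%:R ^+ N)^-1 * \sum_(z | f z (+) f (xorv z u) != i) (1 : R).
Proof.
set c : R := (2%:R ^+ N)^-1.
set D := fun z => f z (+) f (xorv z u).
have H1 := autocorr f u; have H2 := parseval f.
rewrite (bigID (fun w => dotb w u)) /= in H1.
rewrite (bigID (fun w => dotb w u)) /= in H2.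
rewrite [X in _ = _ * X](bigID D) /= in H1.
have H3 := sum1_bv; rewrite (bigID D) /= in H3.
have Ec : c * 2%:R ^+ N = 1 by rewrite /c mulVf // two_pow_neq0.
rewrite -/c in H1.
have e1 : \sum_(w | dotb w u) (walsh R f w) ^+ 2 * (-1) ^+ dotb w u = - \sum_(w | dotb w u) (walsh R f w) ^+ 2.
  rewrite -sumrN; apply: eq_bigr => w ->; by rewrite expr1 mulrN1.
have e2 : \sum_(w | ~~ dotb w u) (walsh R f w) ^+ 2 * (-1) ^+ dotb w u = \sum_(w | ~~ dotb w u) (walsh R f w) ^+ 2.
  apply: eq_bigr => w /negbTE ->; by rewrite expr0 mulr1.
have e3 : \sum_(z | D z) ((-1) ^+ D z : R) = - \sum_(z | D z) (1 : R).
  rewrite -sumrN; apply: eq_bigr => z ->; by rewrite expr1.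
have e4 : \sum_(z | ~~ D z) ((-1) ^+ D z : R) = \sum_(z | ~~ D z) (1 : R).
  apply: eq_bigr => z /negbTE ->; by rewrite expr0.
move: H1; rewrite -/c e1 e2 e3 e4 => H1.
move: H1 H2 H3 Ec.
set A1 := \sum_(w | dotb w u) (walsh R f w) ^+ 2; set A0 := \sum_(w | ~~ dotb w u) (walsh R f w) ^+ 2.
set C1 := \sum_(z | D z) (1 : R); set C0 := \sum_(z | ~~ D z) (1 : R).
move=> H1 H2 H3 Ec.
have H4 : c * (C1 + C0) = 1 by rewrite H3.
have [K1 K0] := alg_solve H1 H2 H4.
case: i.
  have -> : \sum_(w | dotb w u != true) (walsh R f w) ^+ 2 = A0 by apply: eq_bigl => w; case: (dotb w u).
  by rewrite K0; congr (_ * _); apply: eq_bigl => z; rewrite /D; case: (_ (+) _).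
have -> : \sum_(w | dotb w u != false) (walsh R f w) ^+ 2 = A1 by apply: eq_bigl => w; case: (dotb w u).
by rewrite K1; congr (_ * _); apply: eq_bigl => z; rewrite /D; case: (_ (+) _).
Qed.

End Fourier.

Section Prod.
Variable R : numFieldType.
Variables (n m p : nat) (F : bv n -> bv m -> bv n).

Lemma sum_prod_sample (h : 'I_n -> bv (n + m) -> R) :
  \sum_(s : sample n m p) \prod_(j < n) \prod_(r < p) h j (s j r) =
  \prod_(j < n) \prod_(r < p) \sum_w h j w.
Proof.
rewrite (eq_bigr (fun j => \sum_(t : {ffun 'I_p -> bv (n + m)}) \prod_(r < p) h j (t r))); last first.
  by move=> j _; rewrite bigA_distr_bigA.
by rewrite bigA_distr_bigA.
Qed.

Lemma prob_forall (j0 : 'I_n) (G : pred (bv (n + m))) :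
  Pr R F (fun s : sample n m p => [forall r, G (s j0 r)]) =
  (\sum_(w | G w) (walsh R (Fcomp F j0) w) ^+ 2) ^+ p.
Proof.
pose h j w := if (j == j0) && ~~ G w then 0 else (walsh R (Fcomp F j) w) ^+ 2.
rewrite /Pr big_mkcond /=.
rewrite (eq_bigr (fun s : sample n m p => \prod_(j < n) \prod_(r < p) h j (s j r))); last first.
  move=> s _; case: ifP => [/forallP E|/negbT].
    rewrite /sample_prob; apply: eq_bigr => j _; apply: eq_bigr => r _.
    rewrite /h; case: eqP => //= ->; by rewrite E.
  rewrite negb_forall => /existsP [r Hr].
  rewrite (bigD1 j0) //= (bigD1 r) //= {1}/h eqxx /= Hr.
  by rewrite !mul0r.
rewrite sum_prod_sample (bigD1 j0) //= [X in _ * X]big1 ?mulr1; last first.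
  move=> j jn; rewrite (eq_bigr (fun _ => 1)) ?prodr_const ?expr1n //.
  move=> r _; rewrite /h (negbTE jn) /=; exact: parseval.
rewrite (eq_bigr (fun _ => \sum_(w | G w) (walsh R (Fcomp F j0) w) ^+ 2)).
  by rewrite prodr_const card_ord.
move=> r _; rewrite /h eqxx /= [RHS]big_mkcond /=; apply: eq_bigr => w _.
by case: (G w).
Qed.

End Prod.

Lemma card_sum (R : numFieldType) (T : finType) (P : pred T) :
  (#|[set x | P x]|%:R : R) = \sum_x (P x)%:R.
Proof.
rewrite -sum1dep_card natr_sum big_mkcond; apply: eq_bigr => x _.
by case: (P x).
Qed.

Section Comb.
Variables (n m : nat).

Definition ext (a : bv n) : bv (n + m) :=
  [ffun i => if split i is inl i' then a i' else false].
Definition join (x : bv n) (k : bv m) : bv (n + m) :=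
  [ffun i => match split i with inl i' => x i' | inr i' => k i' end].

Lemma split_l (i : 'I_n) : split (lshift m i) = inl i.
Proof. by rewrite -[lshift m i]/(unsplit (inl i)) unsplitK. Qed.
Lemma split_r (i : 'I_m) : split (rshift n i) = inr i.
Proof. by rewrite -[rshift n i]/(unsplit (inr i)) unsplitK. Qed.

Lemma lpart_join x k : lpart (join x k) = x.
Proof. by apply/ffunP => i; rewrite !ffunE split_l. Qed.
Lemma rpart_join x k : rpart (join x k) = k.
Proof. by apply/ffunP => i; rewrite !ffunE split_r. Qed.
Lemma join_part z : join (lpart z) (rpart z) = z.
Proof.
apply/ffunP => i; rewrite ffunE -{2}(splitK i).
by case: (split i) => i' /=; rewrite ffunE.
Qed.

Lemma xor_join_ext x k a : xorv (join x k) (ext a) = join (xorv x a) k.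
Proof.
apply/ffunP => i; rewrite !ffunE; case: (split i) => i'; by rewrite ?ffunE ?addbF.
Qed.

Lemma dotb_ext w a : dotb w (ext a) = dotb (lpart w) a.
Proof.
rewrite /dotb big_split_ord /= [X in _ (+) X]big1 ?addbF.
  by apply: eq_bigr => i _; rewrite !ffunE split_l.
by move=> i _; rewrite !ffunE split_r andbF.
Qed.

Lemma sum_join (R : numFieldType) (g : bv (n + m) -> R) :
  \sum_z g z = \sum_(x : bv n) \sum_(k : bv m) g (join x k).
Proof.
rewrite pair_big /=.
rewrite (reindex (fun p : bv n * bv m => join p.1 p.2)) //.
exists (fun z => (lpart z, rpart z)) => [[x k] _|z _] /=.
  by rewrite lpart_join rpart_join.
exact: join_part.
Qed.

Variable R : realFieldType.
Variable F : bv n -> bv m -> bv n.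

Definition Wt (j : 'I_n) (a : bv n) (i : bool) : R :=
  \sum_(w | dotb (lpart w) a != i) (walsh R (Fcomp F j) w) ^+ 2.

Lemma Wt_count j a i : Wt j a i = (2%:R ^+ (n + m))^-1 *
  \sum_(x : bv n) \sum_(k : bv m) ((F (xorv x a) k j (+) F x k j) != i)%:R.
Proof.
rewrite /Wt; under eq_bigl do rewrite -dotb_ext.
rewrite weight_ne; congr (_ * _).
rewrite big_mkcond sum_join; apply: eq_bigr => x _; apply: eq_bigr => k _.
rewrite xor_join_ext /Fcomp !lpart_join !rpart_join addbC.
by case: (_ != _).
Qed.


Lemma two_pow_gt0 k : (0 : R) < 2%:R ^+ k.
Proof. by rewrite exprn_gt0 // ltr0n. Qed.

Lemma det (delta qn sigma : R) (a : bv n) (b : tdiff n) :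
  0 < sigma -> 0 < qn -> 0 <= delta -> n%:R * delta <= sigma / (2%:R * qn) ->
  (forall j i, b j = Some i -> Wt j a i <= delta) -> good_tdiff sigma qn F a b.
Proof.
move=> s0 q0 d0 hnd hW.
pose bad x k := ~~ matches b (xorv (F (xorv x a) k) (F x k)).
pose Bk k : R := \sum_(x : bv n) (bad x k)%:R.
pose Kb := [set k | sigma * 2%:R ^+ n <= Bk k].
pose bj j x k := if b j is Some v then (F (xorv x a) k j (+) F x k j) != v else false.
have S1 x k : (bad x k)%:R <= \sum_(j < n) ((bj j x k)%:R : R).
  case E: (bad x k); last by rewrite sumr_ge0 // => j _; rewrite ler0n.
  move: E; rewrite /bad /matches negb_forall => /existsP [j Hj].
  rewrite (bigD1 j) //= -[1%:R]addr0 lerD //; last by rewrite sumr_ge0 // => i _; rewrite ler0n.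
  rewrite /bj; move: Hj; case: (b j) => // v; rewrite ffunE => ->; by [].
have S2 j : \sum_(k : bv m) \sum_(x : bv n) ((bj j x k)%:R : R) <= 2%:R ^+ (n + m) * delta.
  rewrite /bj; case Hb: (b j) => [v|]; last first.
    rewrite big1 ?mulr_ge0 ?(ltW (two_pow_gt0 _)) // => k _; by rewrite big1.
  have := Wt_count j a v; rewrite exchange_big /= => HW.
  have -> : \sum_(k : bv m) \sum_(x : bv n) ((F (xorv x a) k j (+) F x k j != v)%:R : R)
      = 2%:R ^+ (n + m) * Wt j a v.
    by rewrite HW mulrA mulfV ?mul1r // gt_eqF // two_pow_gt0.
  by rewrite ler_wpM2l ?(ltW (two_pow_gt0 _)) // hW.
have S3 : \sum_(k : bv m) Bk k <= n%:R * (2%:R ^+ (n + m) * delta).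
  apply: (@le_trans _ _ (\sum_(k : bv m) \sum_(x : bv n) \sum_(j < n) ((bj j x k)%:R : R))).
    by apply: ler_sum => k _; apply: ler_sum => x _; exact: S1.
  under eq_bigr do rewrite exchange_big /=.
  rewrite exchange_big /=.
  apply: (@le_trans _ _ (\sum_(j < n) 2%:R ^+ (n + m) * delta)).
    by apply: ler_sum => j _; exact: S2.
  by rewrite sumr_const card_ord mulr_natl.
have Bk0 k : 0 <= Bk k by rewrite sumr_ge0 // => x _; rewrite ler0n.
have S4 : #|Kb|%:R * (sigma * 2%:R ^+ n) <= \sum_(k : bv m) Bk k.
  rewrite mulrC mulr_natr -sumr_const [X in _ <= X](bigID (mem Kb)) /= -[X in X <= _]addr0.
  apply: lerD; last by rewrite sumr_ge0.
  by apply: ler_sum => k; rewrite inE.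
have cardm : #|{: bv m}| = (2 ^ m)%N by rewrite card_ffun card_bool card_ord.
have Mpos : (0 : R) < (2 ^ m)%:R by rewrite ltr0n expn_gt0.
have PN : (2%:R ^+ (n + m) : R) = 2%:R ^+ n * (2 ^ m)%:R by rewrite exprD natrX.
have hK : #|Kb|%:R <= (2 ^ m)%:R * (qn^-1 / 2%:R) :> R.
  rewrite -(ler_pM2r (_ : 0 < sigma * 2%:R ^+ n)); last by rewrite mulr_gt0 // two_pow_gt0.
  apply: (le_trans S4); apply: (le_trans S3).
  rewrite PN.
  have : n%:R * delta * (2%:R ^+ n * (2 ^ m)%:R) <= sigma / (2%:R * qn) * (2%:R ^+ n * (2 ^ m)%:R).
    by rewrite ler_pM2r // mulr_gt0 // two_pow_gt0.
  move=> H; apply: (le_trans _ (le_trans H _)); first by rewrite mulrA mulrAC -!mulrA le_refl.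
  rewrite le_eqVlt; apply/orP; left; apply/eqP; field.
  by rewrite gt_eqF.
apply/existsP; exists (~: Kb); apply/andP; split.
  have cK := cardsC Kb; rewrite cardm in cK.
  have -> : #|~: Kb| = (2 ^ m - #|Kb|)%N by rewrite -cK addKn.
  rewrite cardm natrB; last by rewrite -cK leq_addr.
  rewrite mulrBl mulfV ?gt_eqF //.
  have : #|Kb|%:R / (2 ^ m)%:R <= qn^-1 / 2%:R :> R.
    by rewrite ler_pdivrMr // mulrC.
  have : (0 : R) < qn^-1 by rewrite invr_gt0.
  move=> *; lra.
apply/forallP => k; apply/implyP; rewrite inE => /negP Hk.
have Hlt : Bk k < sigma * 2%:R ^+ n by rewrite ltNge; apply/negP => H; apply: Hk; rewrite inE.
rewrite card_sum.
have -> : \sum_(x : bv n) ((matches b (xorv (F (xorv x a) k) (F x k)))%:R : R)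
    = 2%:R ^+ n - Bk k.
  rewrite -[2%:R ^+ n](sum1_bv R) /Bk -sumrB; apply: eq_bigr => x _.
  by rewrite /bad; case: (matches _ _); rewrite ?subr0 ?subrr.
rewrite mulrBl mulfV ?gt_eqF ?two_pow_gt0 //.
have : Bk k / 2%:R ^+ n < sigma by rewrite ltr_pdivrMr ?two_pow_gt0.
move=> *; lra.
Qed.

End Comb.

Section Fail.
Variable R : realFieldType.
Variables (n m p : nat) (F : bv n -> bv m -> bv n).

Lemma sample_prob_ge0 (s : sample n m p) : (0 : R) <= sample_prob R F s.
Proof. by apply: prodr_ge0 => j _; apply: prodr_ge0 => r _; exact: sqr_ge0. Qed.

Lemma Wt_le1 j a i : 0 <= 1 - Wt R F j a i.
Proof.
have := parseval R (Fcomp F j); rewrite (bigID (fun w => dotb (lpart w) a != i)) /=.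
rewrite /Wt => <-; rewrite addrAC subrr add0r; by apply: sumr_ge0 => w _; exact: sqr_ge0.
Qed.

Lemma prob_Et j a i :
  Pr R F (fun s : sample n m p => [forall r, dotb (lpart (s j r)) a == i]) =
  (1 - Wt R F j a i) ^+ p.
Proof.
rewrite (@prob_forall R n m p F j (fun w => dotb (lpart w) a == i)); congr (_ ^+ _).
have := parseval R (Fcomp F j); rewrite (bigID (fun w => dotb (lpart w) a == i)) /=.
move=> <-; rewrite /Wt addrK; apply: eq_bigl => w; by [].
Qed.

Lemma fail_bound (sigma qn delta : R) :
  0 < sigma -> 0 < qn -> 0 <= delta -> delta <= 1 ->
  n%:R * delta <= sigma / (2%:R * qn) ->
  Pr R F (fun s : sample n m p =>
      [exists a : bv n, exists b : tdiff n,
         alg2_output sigma s a b && ~~ good_tdiff sigma qn F a b])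
  <= (n * 2 ^ n * 2)%:R * (1 - delta) ^+ p.
Proof.
move=> s0 q0 d0 d1 hnd.
pose badt (t : 'I_n * bv n * bool) := delta < Wt R F t.1.1 t.1.2 t.2.
pose Et (t : 'I_n * bv n * bool) (s : sample n m p) :=
  [forall r, dotb (lpart (s t.1.1 r)) t.1.2 == t.2].
have SA s : [exists a : bv n, exists b : tdiff n,
         alg2_output sigma s a b && ~~ good_tdiff sigma qn F a b] ->
    exists t, badt t && Et t s.
  case/existsP => a /existsP [b /andP [Halg NG]].
  have : [exists j, exists i : bool, (b j == Some i) && (delta < Wt R F j a i)].
    apply: (contraNT _ NG) => H.
    apply: (det s0 q0 d0 hnd) => j i Hb.
    rewrite leNgt; apply/negP => Hlt; apply: (negP H).
    by apply/existsP; exists j; apply/existsP; exists i; rewrite Hb eqxx Hlt.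
  case/existsP => j /existsP [i /andP [/eqP Hb Hlt]].
  exists (j, a, i); rewrite /badt /Et /= Hlt /=.
  move: Halg => /existsP [t /and4P [_ _ _ /existsP [J /and5P [_ _ _ _ /forallP HJ]]]].
  move: (HJ j); case: (j \in J); rewrite Hb //.
  by rewrite inE.
have SB : Pr R F (fun s : sample n m p =>
      [exists a : bv n, exists b : tdiff n,
         alg2_output sigma s a b && ~~ good_tdiff sigma qn F a b])
   <= \sum_(t | badt t) Pr R F (Et t).
  rewrite /Pr.
  apply: (@le_trans _ _ (\sum_(s : sample n m p) \sum_(t | badt t)
                          sample_prob R F s * (Et t s)%:R)).
    rewrite [X in _ <= X](bigID (fun s : sample n m p => [exists a : bv n, exists b : tdiff n,
         alg2_output sigma s a b && ~~ good_tdiff sigma qn F a b])) /= -[X in X <= _]addr0.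
    apply: lerD; last first.
      apply: sumr_ge0 => s _; apply: sumr_ge0 => t _.
      by rewrite mulr_ge0 ?ler0n ?sample_prob_ge0.
    apply: ler_sum => s /SA [t /andP [bt et]].
    rewrite (bigD1 t) //= et mulr1 -[X in X <= _]addr0 lerD //.
    apply: sumr_ge0 => t' _; by rewrite mulr_ge0 ?ler0n ?sample_prob_ge0.
  rewrite exchange_big /=; apply: ler_sum => t _.
  rewrite [X in _ <= X]big_mkcond /=; apply: ler_sum => s _.
  by case: (Et t s); rewrite ?mulr1 ?mulr0.
apply: (le_trans SB).
apply: (@le_trans _ _ (\sum_(t : 'I_n * bv n * bool) (1 - delta) ^+ p)).
  rewrite [X in _ <= X](bigID badt) /= -[X in X <= _]addr0.
  apply: lerD; last by apply: sumr_ge0 => t _; apply: exprn_ge0; rewrite subr_ge0.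
  apply: ler_sum => [[[j a] i]] bt; rewrite /Et /= prob_Et.
  apply: lerXn2r; rewrite ?nnegrE ?Wt_le1 ?subr_ge0 //.
  by rewrite lerD2l lerN2 ltW.
rewrite sumr_const !card_prod card_ord card_ffun card_bool card_ord.
by rewrite mulr_natl.
Qed.

End Fail.

Section Poly.
Variable R : archiRealFieldType.

Lemma nat_ge_bound (x : R) (k : nat) : 0 <= x -> (Num.bound x <= k)%N -> x < k%:R.
Proof.
move=> x0 hk; apply: (lt_le_trans (archi_boundP x0)); by rewrite ler_nat.
Qed.

Lemma poly_lb (q : {poly R}) :
  (exists N : nat, forall n : nat, (N <= n)%N -> 0 < q.[n%:R]) ->
  exists c0 : R, 0 < c0 /\ exists N : nat, forall n : nat, (N <= n)%N -> c0 <= q.[n%:R].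
Proof.
case=> N HN.
case Hs: (size q) => [|d].
  by have := HN N (leqnn N); rewrite horner_coef Hs big_ord0 ltxx.
case: d Hs => [|d] Hs.
  have E x : q.[x] = q`_0 by rewrite horner_coef Hs big_ord1 expr0 mulr1.
  exists q`_0; split; first by rewrite -(E N%:R) HN.
  by exists 0%N => n _; rewrite E.
set a := q`_d.+1.
set S := \sum_(i < d.+1) `|q`_i|.
have S0 : 0 <= S by rewrite sumr_ge0 // => i _; exact: normr_ge0.
have key x : 1 <= x ->
    a * x ^+ d.+1 - S * x ^+ d <= q.[x] /\ q.[x] <= a * x ^+ d.+1 + S * x ^+ d.
  move=> x1; have x0 : 0 <= x by apply: le_trans x1.
  rewrite horner_coef Hs big_ord_recr /=.
  set T := \sum_(i < d.+1) q`_i * x ^+ i.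
  have hT : `|T| <= S * x ^+ d.
    apply: (le_trans (ler_norm_sum _ _ _)).
    rewrite /S mulr_suml; apply: ler_sum => i _.
    rewrite normrM normrX (ger0_norm x0) ler_wpM2l ?normr_ge0 //.
    by apply: ler_weXn2l => //; rewrite -ltnS.
  have := ler_norm T; have := ler_norm (- T); rewrite normrN.
  move=> h1 h2; rewrite -/a; split; lra.
have a0 : a != 0.
  have : lead_coef q != 0 by rewrite lead_coef_eq0 -size_poly_eq0 Hs.
  by rewrite lead_coefE Hs.
case: (ltgtP a 0) a0 => // [an|ap] _.
  pose n := maxn N (maxn 1 (Num.bound (S / (- a)))).
  have hN : (N <= n)%N by rewrite leq_maxl.
  have x1 : 1 <= n%:R :> R by rewrite ler1n /n leq_max leq_maxl orbT.
  have xb : S / (- a) < n%:R.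
    apply: nat_ge_bound; first by rewrite divr_ge0 // oppr_ge0 ltW.
    by rewrite /n leq_max leq_max leqnn !orbT.
  have [_ hq] := key _ x1.
  have := HN n hN; move: xb hq.
  rewrite ltr_pdivrMr ?oppr_gt0 // exprS.
  set x := n%:R; set y := x ^+ d.
  have y0 : 0 < y by rewrite exprn_gt0 // (lt_le_trans ltr01 x1).
  move=> xb hq hpos.
  have : y * (a * x + S) < 0.
    rewrite pmulr_rlt0 //; lra.
  nra.
exists a; split=> //.
exists (maxn N (maxn 1 (Num.bound ((S + a) / a)))) => n hn.
have x1 : 1 <= n%:R :> R.
  by rewrite ler1n; apply: leq_trans hn; rewrite leq_max leq_maxl orbT.
have xb : (S + a) / a < n%:R.
  apply: nat_ge_bound; first by rewrite divr_ge0 // ?addr_ge0 // ltW.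
  by apply: leq_trans hn; rewrite leq_max leq_max leqnn !orbT.
have [hq _] := key _ x1.
move: xb hq; rewrite ltr_pdivrMr // exprS.
set x := n%:R; set y := x ^+ d.
have y1 : 1 <= y by rewrite exprn_ege1.
move=> xb hq.
have : 0 <= (y - 1) * (a * x - S) by rewrite mulr_ge0 // subr_ge0 //; lra.
nra.
Qed.

End Poly.

Lemma nat_bound (n c : nat) : (1 <= n)%N ->
  (n * 2 ^ n * 2 * n ^ c < 2 ^ (n * (c + 2) + 2))%N.
Proof.
move=> n1.
have h1 : (n ^ c.+1 <= (2 ^ n) ^ c.+1)%N.
  by rewrite leq_exp2r // ltnW // ltn_expl.
have -> : (n * 2 ^ n * 2 * n ^ c = 2 * 2 ^ n * n ^ c.+1)%N.
  rewrite expnS; move: (2 ^ n)%N (n ^ c)%N => y z; ring.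
have -> : (2 ^ (n * (c + 2) + 2) = 2 * (2 * 2 ^ n * (2 ^ n) ^ c.+1))%N.
  have -> : (n * (c + 2) + 2 = n * c.+1 + n + 1 + 1)%N by ring.
  rewrite !expnD expnM expn1; move: (2 ^ n)%N ((2 ^ n) ^ c.+1)%N => y z; ring.
apply: (leq_ltn_trans (_ : _ <= 2 * 2 ^ n * (2 ^ n) ^ c.+1)%N).
  by rewrite leq_pmul2l // muln_gt0 expn_gt0.
by rewrite -[X in (X < _)%N]mul1n ltn_pmul2r // !muln_gt0 !expn_gt0.
Qed.

Section Asym.
Variable R : archiRealFieldType.

Lemma bernoulli (d : R) (k : nat) : 0 <= d -> 1 + k%:R * d <= (1 + d) ^+ k.
Proof.
move=> d0; elim: k => [|k IH]; first by rewrite mul0r addr0 expr0.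
rewrite exprS -natr1.
have : 0 <= k%:R * d by rewrite mulr_ge0 ?ler0n.
move=> h; nra.
Qed.

Lemma half_pow (d : R) (L : nat) : 0 <= d -> d <= 1 -> 1 <= L%:R * d ->
  (1 - d) ^+ L * 2%:R <= 1.
Proof.
move=> d0 d1 Ld.
have hb := bernoulli L d0.
have e : (1 - d) ^+ L * (1 + d) ^+ L <= 1.
  rewrite -exprMn; apply: exprn_ile1; nra.
have p0 : 0 <= (1 - d) ^+ L by apply: exprn_ge0; lra.
apply: le_trans e; apply: ler_wpM2l => //; lra.
Qed.

Lemma pow_decay (d : R) (L p : nat) : 0 <= d -> d <= 1 -> 1 <= L%:R * d -> (0 < L)%N ->
  (1 - d) ^+ p <= ((2 ^ (p %/ L))%:R)^-1.
Proof.
move=> d0 d1 Ld L0.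
have a0 : 0 <= 1 - d by lra.
have a1 : 1 - d <= 1 by lra.
apply: (le_trans (ler_wiXn2l a0 a1 (leq_trunc_div p L))).
rewrite mulnC exprM natrX -exprVn.
apply: lerXn2r; rewrite ?nnegrE ?exprn_ge0 ?invr_ge0 ?ler0n //.
have := half_pow d0 d1 Ld; rewrite -ler_pdivlMr ?ltr0n //.
by rewrite mul1r.
Qed.

Lemma main_n (n c : nat) (Q sigma c0 : R) (p : nat) :
  0 < sigma -> sigma < 1 -> 0 < c0 -> c0 <= Q -> (1 <= n)%N ->
  1 <= n%:R * c0 -> (6 * (c + 4))%:R <= c0 * n%:R ->
  Q ^+ 2 * n%:R ^+ 3 / (2%:R * sigma ^+ 2) <= p%:R ->
  let d := sigma / (2%:R * n%:R * Q) in
  0 <= d /\ d <= 1 /\ n%:R * d <= sigma / (2%:R * Q) /\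
  (n * 2 ^ n * 2)%:R * (1 - d) ^+ p < (n%:R ^+ c)^-1.
Proof.
move=> s0 s1 c00 cQ n1 nc0 hc hp d.
set t : R := n%:R.
have t1 : 1 <= t by rewrite ler1n.
have Q0 : 0 < Q by apply: lt_le_trans cQ.
have tQ : 1 <= t * Q.
  apply: (le_trans nc0); rewrite ler_wpM2l //; lra.
have tQ0 : 0 < t * Q by lra.
have d0 : 0 < d by rewrite /d divr_gt0 // !mulr_gt0 // ?ltr0n ?(lt_le_trans ltr01 t1).
have d1 : d <= 1.
  rewrite /d ler_pdivrMr ?mul1r; last by rewrite -mulrA mulr_gt0 ?ltr0n.
  rewrite -mulrA; lra.
have nd : t * d = sigma / (2%:R * Q).
  rewrite /d; field; apply/andP; split; rewrite gt_eqF //.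
  by apply: lt_le_trans t1.
split; first exact: ltW.
split; first by [].
split; first by rewrite nd.
pose x := 2%:R * t * Q / sigma.
have xd : x * d = 1 by rewrite /x /d; field; rewrite !gt_eqF //; lra.
have x0 : 0 < x by rewrite /x divr_gt0 // -mulrA mulr_gt0 ?ltr0n.
pose L := `|Num.ceil x|%N.
have cx0 : (0 <= Num.ceil x)%R by rewrite ceil_ge0; lra.
have LE : L%:R = (Num.ceil x)%:~R :> R by rewrite natr_absz ger0_norm.
have Lge : x <= L%:R by rewrite LE ceil_ge.
have Lle : L%:R <= x + 1.
  have := ceilB1_lt x; rewrite intrD LE => h; lra.
have Ld : 1 <= L%:R * d.
  by rewrite -{1}xd ler_pM2r.
have L0 : (0 < L)%N by rewrite -(ltr0n R); lra.
set B := (n * (c + 2) + 2)%N.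
have hB : (B * L <= p)%N.
  rewrite -(ler_nat R) natrM.
  have hB1 : B%:R <= t * (c + 4)%:R :> R.
    rewrite /t -natrM ler_nat /B (_ : (c + 4 = c + 2 + 2)%N); last by rewrite -addnA.
    by rewrite [X in (_ <= X)%N]mulnDr leq_add2l leq_pmull.
  have hL : L%:R <= 3%:R * t * Q / sigma.
    apply: (le_trans Lle); rewrite /x.
    have : 1 <= t * Q / sigma.
      rewrite ler_pdivlMr //; lra.
    have -> : 3%:R * t * Q / sigma = 2%:R * t * Q / sigma + t * Q / sigma.
      by field; rewrite gt_eqF.
    move=> h; lra.
  apply: (le_trans (ler_pM (ler0n _ _) (ler0n _ _) hB1 hL)).
  apply: le_trans hp.
  set K := (c + 4)%:R : R.
  have hK : 6%:R * K <= c0 * t by rewrite /K -natrM.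
  have e : Q ^+ 2 * t ^+ 3 / (2%:R * sigma ^+ 2) - t * K * (3%:R * t * Q / sigma)
      = t ^+ 2 * Q / (2%:R * sigma ^+ 2) * (Q * t - 6%:R * K * sigma).
    by field; rewrite gt_eqF.
  rewrite -subr_ge0 e; apply: mulr_ge0.
    by rewrite divr_ge0 ?mulr_ge0 ?exprn_ge0 ?ler0n; lra.
  have K0 : 0 <= K by rewrite ler0n.
  have h1 : c0 * t <= Q * t by rewrite ler_pM2r //; lra.
  have h2 : 6%:R * K * sigma <= 6%:R * K.
    by rewrite ler_piMr ?mulr_ge0 ?ler0n //; lra.
  lra.
have hM : (B <= p %/ L)%N by rewrite leq_divRL.
have pw := @pow_decay d L p (ltW d0) d1 Ld L0.
have pw2 : ((2 ^ (p %/ L))%:R)^-1 <= ((2 ^ B)%:R)^-1 :> R.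
  by rewrite lef_pV2 ?posrE ?ltr0n ?expn_gt0 // ler_nat leq_exp2l.
have C0 : (0 : R) < (n * 2 ^ n * 2)%:R by rewrite ltr0n !muln_gt0 expn_gt0 n1.
apply: (le_lt_trans (ler_wpM2l (ltW C0) (le_trans pw pw2))).
have tc : 0 < t ^+ c by rewrite exprn_gt0 //; lra.
rewrite ltr_pdivrMr ?ltr0n ?expn_gt0 // mulrC ltr_pdivlMr //.
rewrite /t -natrX -!natrM ltr_nat.
by have := nat_bound c n1; rewrite mulnC.
Qed.

End Asym.

Unset Implicit Arguments.

Theorem theorem3 (R : archiRealFieldType) (m : nat -> nat)
  (F : forall n : nat, bv n -> bv (m n) -> bv n)
  (q : {poly R}) (sigma : R) :
  (exists N : nat, forall n : nat, (N <= n)%N -> 0 < q.[n%:R]) ->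
  0 < sigma -> sigma < 1 ->
  negligible (fun n : nat =>
    Pr R (F n) (fun s : sample n (m n) (nruns q sigma n) =>
      [exists a : bv n, exists b : tdiff n,
         alg2_output sigma s a b && ~~ good_tdiff sigma q.[n%:R] (F n) a b])).
Proof.
move=> Hq s0 s1 c.
have [c0 [c00 [N0 HN0]]] := poly_lb Hq.
exists (maxn N0 (maxn 1 (maxn (Num.bound (1 / c0)) (Num.bound ((6 * (c + 4))%:R / c0))))).
move=> n hn.
have hN0 : (N0 <= n)%N by apply: leq_trans hn; rewrite leq_maxl.
have n1 : (1 <= n)%N by apply: leq_trans hn; rewrite leq_max leq_maxl orbT.
have hb1 : (Num.bound (1 / c0) <= n)%N.
  by apply: leq_trans hn; rewrite !leq_max leqnn !orbT.
have hb2 : (Num.bound ((6 * (c + 4))%:R / c0) <= n)%N.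
  by apply: leq_trans hn; rewrite !leq_max leqnn !orbT.
have cQ := HN0 n hN0.
have nc0 : 1 <= n%:R * c0.
  have := nat_ge_bound (ltW (divr_gt0 ltr01 c00)) hb1.
  by rewrite ltr_pdivrMr // => /ltW.
have hc : (6 * (c + 4))%:R <= c0 * n%:R.
  have := nat_ge_bound (divr_ge0 (ler0n _ _) (ltW c00)) hb2.
  by rewrite ltr_pdivrMr // mulrC => /ltW.
set Q := q.[n%:R] in cQ *.
have Q0 : 0 < Q by apply: lt_le_trans cQ.
set X := Q ^+ 2 * n%:R ^+ 3 / (2%:R * sigma ^+ 2).
have X0 : 0 <= X by rewrite divr_ge0 ?mulr_ge0 ?exprn_ge0 ?ler0n ?ltW.
have hp : X <= (nruns q sigma n)%:R.
  rewrite /nruns -/Q -/X natr_absz ger0_norm ?ceil_ge // ceil_ge0.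
  by apply: lt_le_trans X0; rewrite oppr_lt0.
have [d0 [d1 [hnd hlt]]] := main_n s0 s1 c00 cQ n1 nc0 hc hp.
apply: le_lt_trans hlt.
exact: (@fail_bound R n (m n) (nruns q sigma n) (F n) sigma Q _ s0 Q0 d0 d1 hnd).
Qed.
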